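(* Every tree $T$ of order $n\ge 1$ admits a family of $\lceil 3(n-1)/8\rceil$ induced subgraphs, each of order at most $4$, that are pairwise edge-disjoint and whose edge sets together cover $E(T)$.
   Context: A subgraph $S$ of $T$ is induced if $S=T\langle V(S)\rangle$, i.e. it contains every edge of $T$ with both endvertices in $V(S)$. *)

(* Defs.v *)
(* A finite simple graph is a symmetric irreflexive
   relation e on a finType V; edges are unordered pairs {x,y} with e x y. *)
From mathcomp Require Import all_boot.
Set Implicit Arguments. Unset Strict Implicit. Unset Printing Implicit Defensive.

Definition simple_graph (V : finType) (e : rel V) : Prop :=
  symmetric e /\ irreflexive e.

Definition connected_graph (V : finType) (e : rel V) : Prop :=
  forall x y : V, connect e x y.

Definition acyclic_graph (V : finType) (e : rel V) : Prop :=
  forall s : seq V, 2 < size s -> ~~ (cycle e s && uniq s).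

Definition is_tree (V : finType) (e : rel V) : Prop :=
  [/\ simple_graph e, connected_graph e & acyclic_graph e].

(* An induced subgraph T<S> is determined by its vertex set S.
   The edge {x,y} belongs to T<S> iff e x y and x, y \in S. *)
Definition induced_edge (V : finType) (e : rel V) (S : {set V}) (x y : V) : bool :=
  [&& e x y, x \in S & y \in S].

Definition pairwise_edge_disjoint (V : finType) (e : rel V) (k : nat)
  (S : 'I_k -> {set V}) : Prop :=
  forall i j : 'I_k, i != j ->
    forall x y : V, ~~ (induced_edge e (S i) x y && induced_edge e (S j) x y).

Definition covers_edges (V : finType) (e : rel V) (k : nat)
  (S : 'I_k -> {set V}) : Prop :=
  forall x y : V, e x y -> exists i : 'I_k, induced_edge e (S i) x y.

(* Main.v *)
Require Import Defs.
From mathcomp Require Import all_boot.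
From mathcomp Require Import zify.
Set Implicit Arguments. Unset Strict Implicit. Unset Printing Implicit Defensive.

(* Proof strategy: for every vertex set U of the forest, we build
   a family of "pieces" (induced subgraphs of order <= 4) and "lonely" edges with
   8 * #pieces + 4 * #lonely <= 3 * #|U|, by induction removing pendant patterns. *)

Section NBW.
Variable T : eqType.
Variable r : rel T.
Fixpoint nbw (s : seq T) : bool :=
  match s with
  | a :: ((b :: t) as s') => [&& r a b, (if t is c :: _ then a != c else true) & nbw s']
  | _ => true
  end.

Lemma nbw_cons a s : nbw (a :: s) -> nbw s.
Proof. by case: s => //= b t /and3P[]. Qed.

Lemma nbw_cat s1 s2 : nbw (s1 ++ s2) -> nbw s2.
Proof. by elim: s1 => //= a s1 IH /nbw_cons. Qed.

Lemma nbw_path a s : nbw (a :: s) -> path r a s.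
Proof.
elim: s a => //= b t IH a /and3P[-> _ H]; exact: IH.
Qed.

Lemma nbw_rcons s a : nbw (rcons s a) -> nbw s.
Proof.
elim: s => //= x s IH; case: s IH => //= y s IH /and3P[H1 H2 H3].
apply/and3P; split => //; last exact: IH.
by case: s {IH H3} H2.
Qed.
End NBW.

Section Uniq.
Variable V : finType.
Variable e : rel V.
Hypothesis eirr : irreflexive e.
Hypothesis acyc : acyclic_graph e.

Lemma nbw_uniq s : nbw e s -> uniq s.
Proof.
elim/last_ind: s => // t z IH H.
have Ht := IH (nbw_rcons H).
rewrite rcons_uniq Ht andbT; apply/negP => zt.
case/splitPr: zt H Ht => p1 p2.
rewrite -cats1 -catA cat_cons cats1 => /nbw_cat Hc Hu.
have Hu2 : uniq (z :: p2) by move: Hu; rewrite cat_uniq => /and3P[].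
have Hcy : cycle e (z :: p2) by rewrite /= nbw_path.
clear Hu.
case: p2 Hc Hu2 Hcy => [|w [|w' p2]].
- by rewrite /= eirr.
- by rewrite /= eqxx !andbF.
- move=> _ Hu2 Hcy.
  by move: (acyc (s:=z :: w :: w' :: p2) isT); rewrite Hcy Hu2.
Qed.
End Uniq.
Record pat := Pat { padj : seq (seq nat); patt : bool; ppc : seq (seq nat); plon : seq (nat * nat) }.
Definition pk p := size (padj p).
Definition Hb p (i j : nat) : bool := j \in nth [::] (padj p) i.
Definition na p (i : nat) : bool := ~~ patt p || (i != 0).
Definition rng p := iota 0 (pk p).
Definition allp p (P : pred nat) := all P (rng p).
Definition pdisjN p (s t : seq nat) := allp p (fun i => allp p (fun j =>
   ~~ [&& Hb p i j, i \in s, j \in s, i \in t & j \in t])).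
Definition compatN p (l l' : nat * nat) := [&& l.1 != l'.1, l.1 != l'.2, l.2 != l'.1, l.2 != l'.2,
   ~~ Hb p l.1 l'.1, ~~ Hb p l.1 l'.2, ~~ Hb p l.2 l'.1 & ~~ Hb p l.2 l'.2].
Definition ppar p i := head 0 (nth [::] (padj p) i).
Fixpoint ancf p n i := if n is n'.+1 then i :: (if i == 0 then [::] else ancf p n' (ppar p i)) else [::].
Definition anc p i := ancf p (pk p) i.
Definition tpath p i j :=
  let ai := anc p i in let aj := anc p j in
  let l := head 0 [seq x <- ai | x \in aj] in
  take (index l ai) ai ++ l :: rev (take (index l aj) aj).

Definition ok1 p := [&& 0 < pk p,
  all (fun a => all (fun j => j < pk p) a) (padj p),
  allp p (fun i => allp p (fun j => Hb p i j == Hb p j i)),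
  allp p (fun i => ~~ Hb p i i) &
  has (na p) (rng p)].
Definition ok2 p := [&& all (fun s => (size s <= 4) && all (fun i => i < pk p) s) (ppc p),
  pairwise (pdisjN p) (ppc p),
  all (fun l => [&& l.1 < pk p, l.2 < pk p, Hb p l.1 l.2, na p l.1, na p l.2 &
        (patt p ==> ~~ Hb p l.1 0 && ~~ Hb p l.2 0)]) (plon p),
  pairwise (compatN p) (plon p) &
  all (fun l => all (fun s => ~~ ((l.1 \in s) && (l.2 \in s))) (ppc p)) (plon p)].
Definition ok3 p := [&&
  allp p (fun i => allp p (fun j => (Hb p i j && na p i) ==>
     (has (fun s => (i \in s) && (j \in s)) (ppc p) || ((i, j) \in plon p) || ((j, i) \in plon p)))),
  8 * size (ppc p) + 4 * size (plon p) <= 3 * count (na p) (rng p) &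
  allp p (fun i => allp p (fun j => (i != j) ==> (let w := tpath p i j in
     [&& nbw (Hb p) w, all (fun a => a < pk p) w, head 0 w == i, last 0 w == j & 1 < size w])))].
Definition pat_ok p := [&& ok1 p, ok2 p & ok3 p].

Section Main.
Variable V : finType.
Variable e : rel V.
Hypothesis esy : symmetric e.
Hypothesis eirr : irreflexive e.
Hypothesis acyc : acyclic_graph e.

Definition nb (U : {set V}) (z : V) (s : seq V) : Prop :=
  forall w, (w \in U) && e z w = (w \in s).
Definition pdisj (S T : {set V}) : bool :=
  [forall x, forall y, ~~ (induced_edge e S x y && induced_edge e T x y)].
Definition compat (l l' : V * V) : bool :=
  [&& l.1 != l'.1, l.1 != l'.2, l.2 != l'.1, l.2 != l'.2,
      ~~ e l.1 l'.1, ~~ e l.1 l'.2, ~~ e l.2 l'.1 & ~~ e l.2 l'.2].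
Definition good (U : {set V}) (P : seq {set V}) (L : seq (V * V)) : Prop :=
  [/\ all (fun S : {set V} => (S \subset U) && (#|S| <= 4)) P,
     pairwise pdisj P,
     all (fun l => [&& e l.1 l.2, l.1 \in U & l.2 \in U]) L &
     pairwise compat L] /\
  [/\ all (fun l => all (fun S : {set V} => ~~ induced_edge e S l.1 l.2) P) L,
     (forall x y, x \in U -> y \in U -> e x y ->
        has (fun S : {set V} => induced_edge e S x y) P || has (fun l => (l == (x, y)) || (l == (y, x))) L)
   & 8 * size P + 4 * size L <= 3 * #|U| ].
Definition Goal U := exists P L, good U P L.

Lemma uniq_map_inj (T1 T2 : eqType) (f : T1 -> T2) s a c :
  uniq (map f s) -> a \in s -> c \in s -> f a = f c -> a = c.
Proof.
elim: s => //= h s IH /andP[Hn Hu]; rewrite !inE.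
case/orP=> [/eqP->|Ha]; case/orP=> [/eqP->|Hc] //.
- by move=> E; move: Hn; rewrite E map_f.
- by move=> E; move: Hn; rewrite -E map_f.
- exact: IH.
Qed.

Lemma uniq_head_last (T : eqType) (x : T) s : uniq s -> 1 < size s -> head x s != last x s.
Proof.
case: s => // a [|b s] //= /andP[Hn _] _.
apply/negP => /eqP E; move: Hn; rewrite E.
by have := mem_last b s; rewrite inE => ->.
Qed.

Section Reduce.
Variables (U : {set V}) (p : pat) (vs : seq V) (x0 : V).
Hypothesis Hok : pat_ok p.
Hypothesis Hsz : size vs = pk p.
Hypothesis HU : all (fun v => v \in U) vs.
Hypothesis Hex : forall i, i < pk p -> na p i ->
  nb U (nth x0 vs i) (map (nth x0 vs) (nth [::] (padj p) i)).
Hypothesis Hlu : forall i, i < pk p -> uniq (map (nth x0 vs) (nth [::] (padj p) i)).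

Local Notation f := (nth x0 vs).
Local Notation k := (pk p).

Lemma allpP (P : pred nat) : allp p P -> forall i, i < k -> P i.
Proof. by move/allP=> H i Hi; apply: H; rewrite mem_iota. Qed.

Lemma Hb_lt i j : Hb p i j -> (i < k) && (j < k).
Proof.
rewrite /Hb; case: (ltnP i k) => Hi; last by rewrite nth_default.
move: Hok => /and3P[/and5P[_ H _ _ _] _ _].
by move/all_nthP: H => /(_ [::] i Hi)/allP H /H ->.
Qed.

Lemma Hb_sym i j : Hb p i j = Hb p j i.
Proof.
case: (boolP (Hb p i j)) => [H|H]; case: (boolP (Hb p j i)) => [H'|H'] //.
- move: Hok => /and3P[/and5P[_ _ Hs _ _] _ _].
  case/andP: (Hb_lt H) => Hi Hj.
  by move: (allpP Hs Hi) => /allpP/(_ j Hj); rewrite H (negbTE H').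
- move: Hok => /and3P[/and5P[_ _ Hs _ _] _ _].
  case/andP: (Hb_lt H') => Hj Hi.
  by move: (allpP Hs Hi) => /allpP/(_ j Hj); rewrite H' (negbTE H).
Qed.

Lemma Hb_irr i : Hb p i i = false.
Proof.
apply/negbTE/negP => H; case/andP: (Hb_lt H) => Hi _.
move: Hok => /and3P[/and5P[_ _ _ Hs _] _ _].
by move: (allpP Hs Hi); rewrite H.
Qed.

Lemma fU i : i < k -> f i \in U.
Proof. by move=> Hi; move/all_nthP: HU; apply; rewrite Hsz. Qed.

Lemma edge1 i j : Hb p i j -> e (f i) (f j).
Proof.
move=> H; case/andP: (Hb_lt H) => Hi Hj.
case: (boolP (na p i)) => Hn.
- by move: (Hex Hi Hn (f j)); rewrite map_f // => /andP[].
- have Hj' : na p j.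
    move: Hn; rewrite /na negb_or !negbK => /andP[_ /eqP Ei].
    apply/orP; right; apply/negP => /eqP Ej.
    by move: H; rewrite Ei Ej Hb_irr.
  have Hji : Hb p j i by rewrite Hb_sym.
  rewrite esy; move: (Hex Hj Hj' (f i)); rewrite (map_f _ Hji).
  by case/andP.
Qed.

Lemma nbinj a b c : Hb p b a -> Hb p b c -> a != c -> f a != f c.
Proof.
move=> Ha Hc Hne; apply/negP => /eqP E.
case/andP: (Hb_lt Ha) => Hb' _.
by move: Hne; rewrite (uniq_map_inj (Hlu Hb') Ha Hc E) eqxx.
Qed.

Lemma nbw_map w : nbw (Hb p) w -> nbw e (map f w).
Proof.
elim: w => //= a [|b t] IH //= /and3P[H1 H2 H3].
apply/and3P; split; first exact: edge1.
- case: t H2 H3 {IH} => //= c t H2 /and3P[H4 _ _].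
  have H1' : Hb p b a by rewrite Hb_sym.
  exact: (nbinj H1' H4 H2).
- exact: IH.
Qed.

Lemma finj i j : i < k -> j < k -> f i = f j -> i = j.
Proof.
move=> Hi Hj E; apply/eqP/negPn/negP => Hne.
move: Hok => /and3P[_ _ /and3P[_ _ Hw]].
move: (allpP (allpP Hw Hi) Hj); rewrite Hne /= => /and5P[H1 H2 /eqP H3 /eqP H4 H5].
have Hu := nbw_uniq eirr acyc (nbw_map H1).
have := uniq_head_last x0 Hu; rewrite size_map => /(_ H5).
case: (tpath p i j) H3 H4 H5 => // a w /= -> Hl _.
by rewrite (last_map f) Hl E eqxx.
Qed.

Lemma mem_fmap i s : i < k -> all (fun a => a < k) s -> (f i \in map f s) = (i \in s).
Proof.
move=> Hi Hs; apply/mapP/idP => [[j Hj E]|]; last by move=> H; exists i.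
by rewrite (finj Hi _ E) //; move/allP: Hs; apply.
Qed.

Lemma adj_lt i : all (fun a => a < k) (nth [::] (padj p) i).
Proof. by apply/allP => j Hj; case/andP: (Hb_lt Hj). Qed.

Lemma edgeE i j : i < k -> j < k -> e (f i) (f j) = Hb p i j.
Proof.
move=> Hi Hj; case: (boolP (na p i)) => Hn.
- by move: (Hex Hi Hn (f j)); rewrite fU // mem_fmap // adj_lt.
case: (boolP (na p j)) => Hn'.
- by rewrite esy Hb_sym; move: (Hex Hj Hn' (f i)); rewrite fU // mem_fmap // adj_lt.
move: Hn Hn'; rewrite /na !negb_or !negbK => /andP[_ /eqP->] /andP[_ /eqP->].
by rewrite eirr Hb_irr.
Qed.

Definition Dset := [set x | x \in map f (filter (na p) (rng p))].
Definition Sf (s : seq nat) := [set x | x \in map f s].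

Lemma fD a : a < k -> na p a -> f a \in Dset.
Proof. by move=> Ha Hn; rewrite inE map_f // mem_filter Hn mem_iota. Qed.

Lemma inD x : x \in Dset -> exists2 i, i < k & (na p i && (x == f i)).
Proof.
rewrite inE => /mapP[i]; rewrite mem_filter mem_iota => /andP[Hn Hi] ->.
by exists i; rewrite ?Hn ?eqxx.
Qed.

Lemma notD a : a < k -> f a \in U :\: Dset -> ~~ na p a.
Proof. by move=> Ha; rewrite inE => /andP[H _]; apply: contra H; apply: fD. Qed.

Lemma na0 a : a < k -> ~~ na p a -> (a = 0) /\ patt p.
Proof. by rewrite /na negb_or !negbK => _ /andP[-> /eqP]. Qed.

Lemma farU a w : a < k -> na p a -> w \in U :\: Dset -> e (f a) w -> patt p && Hb p a 0.
Proof.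
move=> Ha Hn Hw Ew.
move: (Hex Ha Hn w); rewrite Ew (setDP Hw).1 /= => /esym/mapP[c Hc Ewc].
have Hck : c < k by case/andP: (Hb_lt Hc).
have := notD Hck; rewrite -Ewc => /(_ Hw) /(na0 Hck) [Ec Hp].
by move: Hc; rewrite Ec Hp.
Qed.

Lemma DU : Dset \subset U.
Proof. by apply/subsetP => x /inD[i Hi /andP[_ /eqP->]]; apply: fU. Qed.

Lemma cardD : #|Dset| = count (na p) (rng p).
Proof.
rewrite cardsE -size_filter -(size_map f); apply/card_uniqP.
rewrite map_inj_in_uniq ?filter_uniq ?iota_uniq //.
move=> i j; rewrite !mem_filter !mem_iota /= => /andP[_ Hi] /andP[_ Hj]; exact: finj.
Qed.

Lemma inSf x s : all (fun a => a < k) s -> x \in Sf s -> exists2 i, (i \in s) && (i < k) & x = f i.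
Proof.
move=> Hs; rewrite inE => /mapP[i Hi ->]; exists i => //.
by rewrite Hi; move/allP: Hs => /(_ i Hi).
Qed.

Lemma U'img x s : all (fun a => a < k) s -> x \in U :\: Dset -> x \in Sf s -> x = f 0 /\ patt p.
Proof.
move=> Hs HxU /(inSf Hs) [i /andP[_ Hi] Ex].
rewrite Ex in HxU *; have [-> ->] := na0 Hi (notD Hi HxU); done.
Qed.

Lemma reduce_main : (forall U' : {set V}, #|U'| < #|U| -> Goal U') -> Goal U.
Proof.
move=> IH.
move: (Hok) => /and3P[/and5P[Hk Hadj Hsy0 Hirr Hhas] /and5P[Hpc Hpd Hlo Hlc Hlp] /and3P[Hcov Hcost Hwalk]].
have Hlt : #|U :\: Dset| < #|U|.
  rewrite -(cardsID Dset U) (setIidPr DU) cardD; move: Hhas; rewrite has_count; lia.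
case: (IH _ Hlt) => P' [L' [[G1 G2 G3 G4] [G5 G6 G7]]].
set U' := U :\: Dset in G1 G2 G3 G4 G5 G6 G7.
have Pk : forall s, s \in ppc p -> all (fun a => a < k) s.
  by move=> s /(allP Hpc) /andP[].
have Lk : forall l, l \in plon p -> [&& l.1 < k, l.2 < k, Hb p l.1 l.2, na p l.1, na p l.2 &
        (patt p ==> ~~ Hb p l.1 0 && ~~ Hb p l.2 0)] by move=> l /(allP Hlo).
have P'U : forall S x, S \in P' -> x \in S -> x \in U'.
  by move=> S x /(allP G1) /andP[/subsetP H _] /H.
have L'U : forall l, l \in L' -> [&& e l.1 l.2, l.1 \in U' & l.2 \in U'] by move=> l /(allP G3).
exists (P' ++ map Sf (ppc p)), (L' ++ map (fun l => (f l.1, f l.2)) (plon p)).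
split; split.
- rewrite all_cat; apply/andP; split.
    apply/allP => S HS; case/andP: (allP G1 _ HS) => H1 ->; rewrite andbT.
    exact: subset_trans H1 (subsetDl _ _).
  apply/allP => S /mapP[s Hs ->].
  apply/andP; split.
  + by apply/subsetP => x /(inSf (Pk _ Hs)) [i /andP[_ Hi] ->]; apply: fU.
  + rewrite cardsE (leq_trans (card_size _)) // size_map.
    by move/(allP Hpc): Hs => /andP[].
- rewrite pairwise_cat G2 /=; apply/andP; split.
  + apply/allrelP => S T HS /mapP[s Hs ->].
    apply/forallP => x; apply/forallP => y; apply/negP => /andP[/and3P[Exy xS yS] /and3P[_ xT yT]].
    have [Ex _] := U'img (Pk _ Hs) (P'U _ _ HS xS) xT.
    have [Ey _] := U'img (Pk _ Hs) (P'U _ _ HS yS) yT.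
    by move: Exy; rewrite Ex Ey eirr.
  + rewrite pairwise_map.
    apply: (sub_in_pairwise (P := [pred s | all (fun a => a < k) s])) Hpd; last first.
      by apply/allP => s /Pk.
    move=> s t Hs Ht /= Hst.
    apply/forallP => x; apply/forallP => y; apply/negP => /andP[/and3P[Exy xS yS] /and3P[_ xT yT]].
    have [i /andP[iS ik] Ex] := inSf Hs xS.
    have [j /andP[jS jk] Ey] := inSf Hs yS.
    have [i' /andP[iT ik'] Ex'] := inSf Ht xT.
    have [j' /andP[jT jk'] Ey'] := inSf Ht yT.
    move: (finj ik ik' (etrans (esym Ex) Ex')) (finj jk jk' (etrans (esym Ey) Ey')) => Ei Ej.
    move: (allpP (allpP Hst ik) jk); rewrite -(edgeE ik jk) -Ex -Ey Exy iS jS Ei Ej iT jT.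
    done.
- rewrite all_cat; apply/andP; split.
    apply/allP => l Hl; case/and3P: (L'U _ Hl) => -> H1 H2.
    by rewrite (setDP H1).1 (setDP H2).1.
  apply/allP => l /mapP[[a b] Hl ->] /=.
  case/and5P: (Lk _ Hl) => /= Ha Hb' Hab _ _.
  by rewrite edge1 // !fU.
- rewrite pairwise_cat G4 /=; apply/andP; split.
  + apply/allrelP => l l' Hl /mapP[[a b] Hab ->] /=.
    case/and3P: (L'U _ Hl) => _ H1 H2.
    case/and5P: (Lk _ Hab) => /= Ha Hb' _ Hna /andP[Hnb Hp].
    have Da := fD Ha Hna. have Db := fD Hb' Hnb.
    have neq : forall x y, x \in U' -> y \in Dset -> x != y.
      by move=> x y; rewrite inE => /andP[Hx _] Hy; apply: contraNneq Hx => ->.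
    have noe : forall c w, c < k -> na p c -> (patt p ==> ~~ Hb p c 0) -> w \in U' -> ~~ e w (f c).
      move=> c w Hc Hnc Hc0 Hw; apply/negP; rewrite esy => /(farU Hc Hnc Hw) /andP[H3 H4].
      by move: Hc0; rewrite H3 H4.
    have Ha0 : patt p ==> ~~ Hb p a 0 by case: (patt p) Hp => //= /andP[].
    have Hb0 : patt p ==> ~~ Hb p b 0 by case: (patt p) Hp => //= /andP[].
    by rewrite /compat /= (neq _ _ H1 Da) (neq _ _ H1 Db) (neq _ _ H2 Da) (neq _ _ H2 Db)
      (noe _ _ Ha Hna Ha0 H1) (noe _ _ Hb' Hnb Hb0 H1) (noe _ _ Ha Hna Ha0 H2) (noe _ _ Hb' Hnb Hb0 H2).
  + rewrite pairwise_map.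
    apply: (sub_in_pairwise (P := [pred l | (l.1 < k) && (l.2 < k)])) Hlc; last first.
      by apply/allP => l /Lk /and3P[H1 H2 _]; rewrite /= H1 H2.
    move=> [a b] [c d] /= /andP[Ha Hb'] /andP[Hc Hd].
    rewrite /compatN /compat /= => /and5P[H1 H2 H3 H4 /and4P[H5 H6 H7 H8]].
    rewrite !edgeE // H5 H6 H7 H8 !andbT.
    have fneq : forall i j, i < k -> j < k -> i != j -> f i != f j.
      by move=> i j Hi Hj; apply: contra => /eqP/(finj Hi Hj)->.
    by rewrite !fneq.
- rewrite all_cat; apply/andP; split.
  + apply/allP => l Hl; rewrite all_cat (allP G5 _ Hl) /=.
    apply/allP => S /mapP[s Hs ->]; apply/negP => /and3P[El x1 x2].
    case/and3P: (L'U _ Hl) => _ H1 H2.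
    have [E1 _] := U'img (Pk _ Hs) H1 x1.
    have [E2 _] := U'img (Pk _ Hs) H2 x2.
    by move: El; rewrite E1 E2 eirr.
  + apply/allP => l /mapP[[a b] Hab ->] /=; rewrite all_cat.
    case/and5P: (Lk _ Hab) => /= Ha Hb' _ Hna /andP[Hnb _].
    apply/andP; split.
    * apply/allP => S HS; apply/negP => /and3P[_ H1 _].
      by move: (P'U _ _ HS H1); rewrite inE fD.
    * apply/allP => S /mapP[s Hs ->]; apply/negP => /and3P[_ H1 H2].
      move: (allP (allP Hlp _ Hab) _ Hs) => /=.
      by move: H1 H2; rewrite !inE !mem_fmap ?Pk // => -> ->.
- move=> x y Hx Hy Exy.
  have key : forall x y, x \in Dset -> y \in U -> e x y ->
     has (fun S : {set V} => induced_edge e S x y) (P' ++ map Sf (ppc p))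
     || has (fun l => (l == (x, y)) || (l == (y, x))) (L' ++ map (fun l => (f l.1, f l.2)) (plon p)).
    move=> x1 y1 /inD[i Hi /andP[Hn /eqP Ex]] Hy1 Exy1.
    move: (Hex Hi Hn y1); rewrite Hy1 -Ex Exy1 /= => /esym/mapP[j Hj Ey].
    have Hjk : j < k by case/andP: (Hb_lt Hj).
    move: (allpP (allpP Hcov Hi) Hjk); rewrite /Hb Hj Hn /= => /orP[/orP[/hasP[s Hs /andP[iS jS]]|Hl]|Hl].
    * apply/orP; left; rewrite has_cat; apply/orP; right; apply/hasP; exists (Sf s); first exact: map_f.
      by rewrite /induced_edge Exy1 !inE Ex Ey !map_f.
    * apply/orP; right; rewrite has_cat; apply/orP; right; apply/hasP.
      by exists (f i, f j); [exact: (map_f (fun l => (f l.1, f l.2)) Hl)|rewrite Ex Ey eqxx].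
    * apply/orP; right; rewrite has_cat; apply/orP; right; apply/hasP.
      by exists (f j, f i); [exact: (map_f (fun l => (f l.1, f l.2)) Hl)|rewrite Ex Ey eqxx orbT].
  case: (boolP (x \in Dset)) => HxD; first exact: key.
  case: (boolP (y \in Dset)) => HyD.
    move: (key _ _ HyD Hx (etrans (esy _ _) Exy)).
    case/orP=> [/hasP[S HS HSi]|/hasP[l Hl Hl']]; apply/orP; [left|right]; apply/hasP.
    * exists S; first done.
      by move: HSi; rewrite /induced_edge => /and3P[H1 H2 H3]; rewrite esy H1 H2 H3.
    * by exists l; last rewrite orbC.
  have Hx' : x \in U' by rewrite inE HxD.
  have Hy' : y \in U' by rewrite inE HyD.
  case/orP: (G6 _ _ Hx' Hy' Exy) => /hasP[z Hz Hz']; apply/orP; [left|right];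
    by apply/hasP; exists z; rewrite // mem_cat Hz.
- rewrite !size_cat !size_map.
  have E := cardsID Dset U; rewrite (setIidPr DU) cardD in E.
  rewrite -E; move: G7 Hcost; rewrite -/U'.
  move: (size P') (size L') (size (ppc p)) (size (plon p)) (count (na p) (rng p)) #|U'|.
  move=> a b c d n m; clear; move=> H1 H2; lia.
Qed.
End Reduce.

End Main.
Definition patB := Pat [:: [:: 1; 2; 3]; [:: 0]; [:: 0]; [:: 0]] true [:: [:: 0; 1; 2; 3]] [::].
Lemma okB : pat_ok patB. Proof. by vm_compute. Qed.
Definition patC := Pat [:: [:: 1; 2]; [:: 0]; [:: 0; 3]; [:: 2]] true [:: [:: 1; 0; 2; 3]] [::].
Lemma okC : pat_ok patC. Proof. by vm_compute. Qed.
Definition patD := Pat [:: [:: 1; 3; 5; 7]; [:: 0; 2]; [:: 1]; [:: 0; 4]; [:: 3]; [:: 0; 6]; [:: 5]; [:: 0; 8]; [:: 7]] true [:: [:: 2; 1; 0; 3]; [:: 6; 5; 0; 7]; [:: 4; 3; 8; 7]] [::].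
Lemma okD : pat_ok patD. Proof. by vm_compute. Qed.
Definition patG := Pat [:: [:: 1; 6]; [:: 0; 2; 4]; [:: 1; 3]; [:: 2]; [:: 1; 5]; [:: 4]; [:: 0; 7]; [:: 6]] true [:: [:: 7; 6; 0; 1]; [:: 3; 2; 1; 4]] [:: (4, 5)].
Lemma okG : pat_ok patG. Proof. by vm_compute. Qed.
Definition patH := Pat [:: [:: 1; 6; 7]; [:: 0; 2; 4]; [:: 1; 3]; [:: 2]; [:: 1; 5]; [:: 4]; [:: 0]; [:: 0]] true [:: [:: 0; 6; 7; 1]; [:: 3; 2; 1; 4]] [:: (4, 5)].
Lemma okH : pat_ok patH. Proof. by vm_compute. Qed.
Definition patI := Pat [:: [:: 1; 6; 11]; [:: 0; 2; 4]; [:: 1; 3]; [:: 2]; [:: 1; 5]; [:: 4]; [:: 0; 7; 9]; [:: 6; 8]; [:: 7]; [:: 6; 10]; [:: 9]; [:: 0; 12; 14]; [:: 11; 13]; [:: 12]; [:: 11; 15]; [:: 14]] true [:: [:: 0; 1; 6; 11]; [:: 3; 2; 1; 4]; [:: 8; 7; 6; 9]; [:: 13; 12; 11; 14]] [:: (4, 5); (9, 10); (14, 15)].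
Lemma okI : pat_ok patI. Proof. by vm_compute. Qed.
Definition patJ := Pat [:: [:: 1; 6; 11]; [:: 0; 2; 4]; [:: 1; 3]; [:: 2]; [:: 1; 5]; [:: 4]; [:: 0; 7; 9]; [:: 6; 8]; [:: 7]; [:: 6; 10]; [:: 9]; [:: 0]] true [:: [:: 0; 11; 1; 6]; [:: 3; 2; 1; 4]; [:: 8; 7; 6; 9]] [:: (4, 5); (9, 10)].
Lemma okJ : pat_ok patJ. Proof. by vm_compute. Qed.
Definition patN := Pat [:: [:: 1; 7]; [:: 0; 2]; [:: 1; 3; 5]; [:: 2; 4]; [:: 3]; [:: 2; 6]; [:: 5]; [:: 0; 8]; [:: 7]] true [:: [:: 8; 7; 0; 1]; [:: 2; 1; 3; 5]; [:: 3; 4; 5; 6]] [::].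
Lemma okN : pat_ok patN. Proof. by vm_compute. Qed.
Definition patO := Pat [:: [:: 1; 7]; [:: 0; 2]; [:: 1; 3; 5]; [:: 2; 4]; [:: 3]; [:: 2; 6]; [:: 5]; [:: 0]] true [:: [:: 7; 0; 1; 2]; [:: 4; 3; 2; 5]] [:: (5, 6)].
Lemma okO : pat_ok patO. Proof. by vm_compute. Qed.
Definition patP := Pat [:: [:: 1; 7]; [:: 0; 2]; [:: 1; 3; 5]; [:: 2; 4]; [:: 3]; [:: 2; 6]; [:: 5]; [:: 0; 8; 10]; [:: 7; 9]; [:: 8]; [:: 7; 11]; [:: 10]] true [:: [:: 7; 0; 1; 2]; [:: 4; 3; 2; 5]; [:: 9; 8; 7; 10]] [:: (5, 6); (10, 11)].
Lemma okP : pat_ok patP. Proof. by vm_compute. Qed.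
Definition patQ := Pat [:: [:: 1; 7]; [:: 0; 2]; [:: 1; 3; 5]; [:: 2; 4]; [:: 3]; [:: 2; 6]; [:: 5]; [:: 0; 8]; [:: 7; 9; 11]; [:: 8; 10]; [:: 9]; [:: 8; 12]; [:: 11]] true [:: [:: 2; 1; 0; 7]; [:: 4; 3; 2; 5]; [:: 8; 7; 9; 11]] [:: (5, 6); (9, 10); (11, 12)].
Lemma okQ : pat_ok patQ. Proof. by vm_compute. Qed.
Definition patA := Pat [:: [:: 1]; [:: 0; 2; 3]; [:: 1]; [:: 1]] true [:: [:: 0; 1; 2; 3]] [::].
Lemma okA : pat_ok patA. Proof. by vm_compute. Qed.
Definition patE := Pat [:: [:: 1]; [:: 0; 2; 4; 6]; [:: 1; 3]; [:: 2]; [:: 1; 5]; [:: 4]; [:: 1; 7]; [:: 6]] true [:: [:: 3; 2; 1; 0]; [:: 5; 4; 1; 6]] [:: (6, 7)].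
Lemma okE : pat_ok patE. Proof. by vm_compute. Qed.
Definition patF := Pat [:: [:: 1]; [:: 0; 2]; [:: 1; 3]; [:: 2]] true [:: [:: 0; 1; 2; 3]] [::].
Lemma okF : pat_ok patF. Proof. by vm_compute. Qed.
Definition patK := Pat [:: [:: 1]; [:: 0; 2; 3]; [:: 1]; [:: 1; 4; 6]; [:: 3; 5]; [:: 4]; [:: 3; 7]; [:: 6]] true [:: [:: 1; 0; 2; 3]; [:: 5; 4; 3; 6]] [:: (6, 7)].
Lemma okK : pat_ok patK. Proof. by vm_compute. Qed.
Definition patM := Pat [:: [:: 1]; [:: 0; 2; 7]; [:: 1; 3; 5]; [:: 2; 4]; [:: 3]; [:: 2; 6]; [:: 5]; [:: 1; 8; 10]; [:: 7; 9]; [:: 8]; [:: 7; 11]; [:: 10]] true [:: [:: 1; 0; 2; 7]; [:: 4; 3; 2; 5]; [:: 9; 8; 7; 10]] [:: (5, 6); (10, 11)].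
Lemma okM : pat_ok patM. Proof. by vm_compute. Qed.
Definition patR := Pat [:: [:: 1]; [:: 0; 2]; [:: 1; 3]; [:: 2; 4; 6]; [:: 3; 5]; [:: 4]; [:: 3; 7]; [:: 6]] true [:: [:: 0; 1; 2; 3]; [:: 5; 4; 3; 6]] [:: (6, 7)].
Lemma okR : pat_ok patR. Proof. by vm_compute. Qed.
Definition patT0 := Pat [:: [::]] false [::] [::].
Lemma okT0 : pat_ok patT0. Proof. by vm_compute. Qed.
Definition patT1 := Pat [:: [:: 1]; [:: 0]] false [::] [:: (0, 1)].
Lemma okT1 : pat_ok patT1. Proof. by vm_compute. Qed.
Definition patT2 := Pat [:: [:: 1; 2]; [:: 0]; [:: 0]] false [:: [:: 0; 1; 2]] [::].
Lemma okT2 : pat_ok patT2. Proof. by vm_compute. Qed.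
Definition patT3 := Pat [:: [:: 1]; [:: 0; 2]; [:: 1]] false [:: [:: 0; 1; 2]] [::].
Lemma okT3 : pat_ok patT3. Proof. by vm_compute. Qed.
Definition patT4 := Pat [:: [:: 1; 3]; [:: 0; 2]; [:: 1]; [:: 0; 4]; [:: 3]] false [:: [:: 2; 1; 0; 3]] [:: (3, 4)].
Lemma okT4 : pat_ok patT4. Proof. by vm_compute. Qed.
Definition patT5 := Pat [:: [:: 1; 3; 5]; [:: 0; 2]; [:: 1]; [:: 0; 4]; [:: 3]; [:: 0; 6]; [:: 5]] false [:: [:: 2; 1; 0; 3]; [:: 0; 5; 6]] [:: (3, 4)].
Lemma okT5 : pat_ok patT5. Proof. by vm_compute. Qed.
Definition patT6 := Pat [:: [:: 1]; [:: 0; 2; 4]; [:: 1; 3]; [:: 2]; [:: 1; 5]; [:: 4]] false [:: [:: 0; 1; 2; 3]; [:: 1; 4; 5]] [::].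
Lemma okT6 : pat_ok patT6. Proof. by vm_compute. Qed.
Definition patT7 := Pat [:: [:: 1; 2]; [:: 0]; [:: 0; 3; 5]; [:: 2; 4]; [:: 3]; [:: 2; 6]; [:: 5]] false [:: [:: 1; 0; 2; 3]; [:: 2; 5; 6]] [:: (3, 4)].
Lemma okT7 : pat_ok patT7. Proof. by vm_compute. Qed.
Definition patT8 := Pat [:: [:: 1; 6]; [:: 0; 2; 4]; [:: 1; 3]; [:: 2]; [:: 1; 5]; [:: 4]; [:: 0; 7; 9]; [:: 6; 8]; [:: 7]; [:: 6; 10]; [:: 9]] false [:: [:: 3; 2; 1; 0]; [:: 8; 7; 6; 0]; [:: 1; 4; 6; 9]] [:: (4, 5); (9, 10)].
Lemma okT8 : pat_ok patT8. Proof. by vm_compute. Qed.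
Definition patT9 := Pat [:: [:: 1]; [:: 0; 2]; [:: 1; 3; 5]; [:: 2; 4]; [:: 3]; [:: 2; 6]; [:: 5]] false [:: [:: 0; 1; 2; 3]; [:: 2; 5; 6]] [:: (3, 4)].
Lemma okT9 : pat_ok patT9. Proof. by vm_compute. Qed.
Local Notation nbC := nb.

Section Main2.
Variable V : finType.
Variable e : rel V.
Hypothesis esy : symmetric e.
Hypothesis eirr : irreflexive e.
Hypothesis acyc : acyclic_graph e.
Local Notation nb := (nb e).
Local Notation Goal := (Goal e).
Local Notation reduce_main := (reduce_main esy eirr acyc).

Fixpoint allI (P : nat -> Prop) (s : seq nat) : Prop := if s is i :: s' then P i /\ allI P s' else True.
Lemma allIP (P : nat -> Prop) n : allI P (iota 0 n) -> forall i, i < n -> P i.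
Proof.
have H : forall m, allI P (iota m n) -> forall i, m <= i < m + n -> P i.
  elim: n => [|n IHn] m /=; first by move=> _ i; rewrite addn0; lia.
  move=> [H1 H2] i /andP[Hmi Hi]; case: (ltngtP m i) Hmi => // [Hlt|Heq] _.
  - by apply: (IHn m.+1) => //; rewrite Hlt addSnnS.
  - by rewrite -Heq.
by move=> /H Hi i Hin; apply: Hi.
Qed.

Lemma uniq_sub (T : eqType) (t s : seq T) : uniq t -> (forall a, count_mem a s <= count_mem a t) -> uniq s.
Proof.
move=> Ht; elim: s => //= a s IHs Hc; apply/andP; split.
- have := Hc a; rewrite /= eqxx (count_uniq_mem _ Ht) => H.
  apply/negP => Has; move: H; rewrite -has_pred1 has_count in Has.
  by case: (a \in t) => /=; lia.
- by apply: IHs => b; have := Hc b; rewrite /=; lia.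
Qed.

Definition tL (U : {set V}) (x y : V) := y \in U /\ nb U y [:: x].
Definition tP2 (U : {set V}) (x y : V) := exists z, [/\ y \in U, nb U y [:: x; z], uniq [:: x; z] & tL U y z].
Definition tX2 (U : {set V}) (x y : V) := exists v1 v2, [/\ y \in U, nb U y [:: x; v1; v2], uniq [:: x; v1; v2], tP2 U y v1 & tP2 U y v2].
Definition tY (U : {set V}) (x y : V) := exists a, [/\ y \in U, nb U y [:: x; a], uniq [:: x; a] & tX2 U y a].

Ltac clearP := repeat match goal with H : ?P |- _ => match type of P with Prop => clear H end end.
Ltac solve_uniq := first [ by [] | assumption |
  match goal with H : is_true (uniq _) |- _ =>
    apply: (uniq_sub H); move=> ?; do 4 rewrite /= ?count_cat; clearP; lia end ].

Ltac app_pat ok vs0 x00 IH :=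
  apply: (@reduce_main _ _ vs0 x00 ok _ _ _ _ IH);
  [ by []
  | rewrite /=; repeat (apply/andP; split); by []
  | apply: allIP; cbn -[nbC]; repeat split; try (by []); move=> _; assumption
  | apply: allIP; cbn -[uniq]; repeat split; solve_uniq ].


Ltac gL H z := let h := fresh in have h := H z ltac:(rewrite !inE eqxx ?orbT; done); case: h => ? ?.
Ltac gP H z w := let h := fresh in have h := H z ltac:(rewrite !inE eqxx ?orbT; done); case: h => w [? ? ? [? ?]].
Ltac gX H a v1 l1 v2 l2 := let h := fresh in have h := H a ltac:(rewrite !inE eqxx ?orbT; done);
  case: h => v1 [v2 [? ? ? [l1 [? ? ? [? ?]]] [l2 [? ? ? [? ?]]]]].
Ltac gY H c a v1 l1 v2 l2 := let h := fresh in have h := H c ltac:(rewrite !inE eqxx ?orbT; done);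
  case: h => a [? ? ? [v1 [v2 [? ? ? [l1 [? ? ? [? ?]]] [l2 [? ? ? [? ?]]]]]]].

Definition small (Ls Ps Xs Ys : seq V) : Prop :=
 (exists c, [/\ Ls = [::], Ps = [::], Xs = [::] & Ys = [:: c]]) \/
 (exists a1 a2, [/\ Ls = [::], Ps = [::], Xs = [:: a1; a2] & Ys = [::]]) \/
 (exists l a, [/\ Ls = [:: l], Ps = [::], Xs = [:: a] & Ys = [::]]) \/
 (exists a, [/\ Ls = [::], Ps = [::], Xs = [:: a] & Ys = [::]]) \/
 (exists p1 p2 p3, [/\ Ls = [::], Ps = [:: p1; p2; p3], Xs = [::] & Ys = [::]]) \/
 (exists p1 p2, [/\ Ls = [::], Ps = [:: p1; p2], Xs = [::] & Ys = [::]]) \/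
 (exists p1, [/\ Ls = [::], Ps = [:: p1], Xs = [::] & Ys = [::]]) \/
 (exists l1 l2, [/\ Ls = [:: l1; l2], Ps = [::], Xs = [::] & Ys = [::]]) \/
 (exists l1, [/\ Ls = [:: l1], Ps = [::], Xs = [::] & Ys = [::]]) \/
 [/\ Ls = [::], Ps = [::], Xs = [::] & Ys = [::]].

Section Attach.
Variable U : {set V}.
Hypothesis IH : forall U' : {set V}, #|U'| < #|U| -> Goal U'.

Lemma attach_red y Ls Ps Xs Ys : y \in U -> uniq (Ls ++ Ps ++ Xs ++ Ys) ->
  {in Ls, forall z, tL U y z} -> {in Ps, forall z, tP2 U y z} ->
  {in Xs, forall z, tX2 U y z} -> {in Ys, forall z, tY U y z} ->
  Goal U \/ small Ls Ps Xs Ys.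
Proof.
move=> Hy Hu HL HP HX HY.
case: Ys Hu HY => [|c1 [|c2 Ys]] Hu HY.
- case: Xs Hu HX => [|a1 [|a2 [|a3 Xs]]] Hu HX.
  + case: Ls Hu HL => [|l1 [|l2 [|l3 Ls]]] Hu HL.
    * case: Ps Hu HP => [|p1 [|p2 [|p3 [|p4 Ps]]]] Hu HP.
      -- by right; do 9 right.
      -- by right; do 6 right; left; exists p1.
      -- by right; do 5 right; left; exists p1, p2.
      -- by right; do 4 right; left; exists p1, p2, p3.
      -- left. gP HP p1 w1. gP HP p2 w2. gP HP p3 w3. gP HP p4 w4.
         app_pat okD [:: y; p1; w1; p2; w2; p3; w3; p4; w4] y IH.
    * case: Ps Hu HP => [|p1 Ps] Hu HP.
      -- by right; do 8 right; left; exists l1.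
      -- left. gL HL l1. gP HP p1 w1.
         app_pat okC [:: y; l1; p1; w1] y IH.
    * case: Ps Hu HP => [|p1 Ps] Hu HP.
      -- by right; do 7 right; left; exists l1, l2.
      -- left. gL HL l1. gP HP p1 w1.
         app_pat okC [:: y; l1; p1; w1] y IH.
    * left. gL HL l1. gL HL l2. gL HL l3.
      app_pat okB [:: y; l1; l2; l3] y IH.
  + case: Ps Hu HP => [|p1 Ps] Hu HP.
    * case: Ls Hu HL => [|l1 [|l2 Ls]] Hu HL.
      -- by right; do 3 right; left; exists a1.
      -- by right; do 2 right; left; exists l1, a1.
      -- left. gX HX a1 v1 u1 v2 u2. gL HL l1. gL HL l2.
         app_pat okH [:: y; a1; v1; u1; v2; u2; l1; l2] y IH.
    * left. gX HX a1 v1 u1 v2 u2. gP HP p1 w1.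
      app_pat okG [:: y; a1; v1; u1; v2; u2; p1; w1] y IH.
  + case: Ps Hu HP => [|p1 Ps] Hu HP.
    * case: Ls Hu HL => [|l1 Ls] Hu HL.
      -- by right; right; left; exists a1, a2.
      -- left. gX HX a1 v1 u1 v2 u2. gX HX a2 v3 u3 v4 u4. gL HL l1.
         app_pat okJ [:: y; a1; v1; u1; v2; u2; a2; v3; u3; v4; u4; l1] y IH.
    * left. gX HX a1 v1 u1 v2 u2. gP HP p1 w1.
      app_pat okG [:: y; a1; v1; u1; v2; u2; p1; w1] y IH.
  + left. gX HX a1 v1 u1 v2 u2. gX HX a2 v3 u3 v4 u4. gX HX a3 v5 u5 v6 u6.
    app_pat okI [:: y; a1; v1; u1; v2; u2; a2; v3; u3; v4; u4; a3; v5; u5; v6; u6] y IH.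
- case: Xs Hu HX => [|a1 Xs] Hu HX.
  + case: Ps Hu HP => [|p1 Ps] Hu HP.
    * case: Ls Hu HL => [|l1 Ls] Hu HL.
      -- by right; left; exists c1.
      -- left. gY HY c1 b1 v1 u1 v2 u2. gL HL l1.
         app_pat okO [:: y; c1; b1; v1; u1; v2; u2; l1] y IH.
    * left. gY HY c1 b1 v1 u1 v2 u2. gP HP p1 w1.
      app_pat okN [:: y; c1; b1; v1; u1; v2; u2; p1; w1] y IH.
  + left. gY HY c1 b1 v1 u1 v2 u2. gX HX a1 v3 u3 v4 u4.
    app_pat okP [:: y; c1; b1; v1; u1; v2; u2; a1; v3; u3; v4; u4] y IH.
- left. gY HY c1 b1 v1 u1 v2 u2. gY HY c2 b2 v3 u3 v4 u4.
  app_pat okQ [:: y; c1; b1; v1; u1; v2; u2; c2; b2; v3; u3; v4; u4] y IH.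
Qed.

Lemma split_ch y cs : (forall z, z \in cs -> Goal U \/ tL U y z \/ tP2 U y z \/ tX2 U y z \/ tY U y z) ->
  Goal U \/ exists Ls Ps Xs Ys, [/\ perm_eq cs (Ls ++ Ps ++ Xs ++ Ys), {in Ls, forall z, tL U y z},
     {in Ps, forall z, tP2 U y z}, {in Xs, forall z, tX2 U y z} & {in Ys, forall z, tY U y z}].
Proof.
elim: cs => [|z cs IHc] H.
  by right; exists [::], [::], [::], [::]; split.
have := IHc (fun z' Hz' => H z' (@mem_behead _ (z :: cs) _ Hz')).
case=> [G|[Ls [Ps [Xs [Ys [Hp HL HP HX HY]]]]]]; first by left.
move/permP: Hp => Hp.
have ext : forall (A : seq V) (Q : V -> Prop), Q z -> {in A, forall z, Q z} -> {in z :: A, forall z, Q z}.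
  by move=> A Q Qz HA z'; rewrite inE => /orP[/eqP->|/HA].
case: (H z (mem_head _ _)) => [G|[Hz|[Hz|[Hz|Hz]]]]; first by left.
- right; exists (z :: Ls), Ps, Xs, Ys; split => //; last by apply: ext.
  by apply/permP => q; rewrite /= Hp.
- right; exists Ls, (z :: Ps), Xs, Ys; split => //; last by apply: ext.
  apply/permP => q; move: (Hp q); do 3 rewrite /= ?count_cat; move=> ->; clearP; lia.
- right; exists Ls, Ps, (z :: Xs), Ys; split => //; last by apply: ext.
  apply/permP => q; move: (Hp q); do 3 rewrite /= ?count_cat; move=> ->; clearP; lia.
- right; exists Ls, Ps, Xs, (z :: Ys); split => //; last by apply: ext.
  apply/permP => q; move: (Hp q); do 3 rewrite /= ?count_cat; move=> ->; clearP; lia.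
Qed.

Lemma nb_perm z s s' : perm_eq s s' -> nb U z s -> nb U z s'.
Proof. by move=> Hp H w; rewrite H (perm_mem Hp). Qed.

Lemma branch_red x y cs : x \in U -> y \in U -> x \notin cs -> uniq cs -> nb U y (x :: cs) ->
  (forall z, z \in cs -> Goal U \/ tL U y z \/ tP2 U y z \/ tX2 U y z \/ tY U y z) ->
  Goal U \/ tL U x y \/ tP2 U x y \/ tX2 U x y \/ tY U x y.
Proof.
move=> Hx Hy Hxc Hcu Hn Hch.
case: (split_ch Hch) => [G|[Ls [Ps [Xs [Ys [Hp HL HP HX HY]]]]]]; first by left.
have Hu : uniq (Ls ++ Ps ++ Xs ++ Ys) by rewrite -(perm_uniq Hp).
have Hux : uniq (x :: Ls ++ Ps ++ Xs ++ Ys) by rewrite /= Hu andbT -(perm_mem Hp).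
have {}Hn : nb U y (x :: Ls ++ Ps ++ Xs ++ Ys) by apply: nb_perm Hn; rewrite perm_cons.
clear Hp Hch Hxc Hcu.
case: (attach_red Hy Hu HL HP HX HY) => [G|Hs]; first by left.
move: Hn Hux HL HP HX HY; case: Hs => [[c [-> -> -> ->]]|[[a1 [a2 [-> -> -> ->]]]|[[l [a [-> -> -> ->]]]|[[a [-> -> -> ->]]|[[p1 [p2 [p3 [-> -> -> ->]]]]|[[p1 [p2 [-> -> -> ->]]]|[[p1 [-> -> -> ->]]|[[l1 [l2 [-> -> -> ->]]]|[[l1 [-> -> -> ->]]|[-> -> -> ->]]]]]]]]]] => Hn Hux HL HP HX HY; cbn -[nbC] in Hn.
- left. gY HY c b1 v1 u1 v2 u2.
  app_pat okR [:: x; y; c; b1; v1; u1; v2; u2] x IH.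
- left. gX HX a1 v1 u1 v2 u2. gX HX a2 v3 u3 v4 u4.
  app_pat okM [:: x; y; a1; v1; u1; v2; u2; a2; v3; u3; v4; u4] x IH.
- left. gL HL l. gX HX a v1 u1 v2 u2.
  app_pat okK [:: x; y; l; a; v1; u1; v2; u2] x IH.
- do 4 right; rewrite /tY; exists a; split => //; last exact: HX (mem_head _ _).
- left. gP HP p1 w1. gP HP p2 w2. gP HP p3 w3.
  app_pat okE [:: x; y; p1; w1; p2; w2; p3; w3] x IH.
- do 3 right; left; rewrite /tX2; exists p1, p2; split => //;
    try (exact: HP (mem_head _ _)); try (apply: HP; rewrite !inE eqxx ?orbT //); by move: Hux; rewrite /= ?cats0.
- left. gP HP p1 w1.
  app_pat okF [:: x; y; p1; w1] x IH.
- left. gL HL l1. gL HL l2.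
  app_pat okA [:: x; y; l1; l2] x IH.
- do 2 right; left; rewrite /tP2; exists l1; split => //;
    try (exact: HL (mem_head _ _)); by move: Hux; rewrite /= ?cats0.
- by right; left; split.
Qed.

Lemma root_red r cs : r \in U -> uniq cs -> nb U r cs ->
  (forall z, z \in cs -> Goal U \/ tL U r z \/ tP2 U r z \/ tX2 U r z \/ tY U r z) -> Goal U.
Proof.
move=> Hr Hcu Hn Hch.
case: (split_ch Hch) => [G|[Ls [Ps [Xs [Ys [Hp HL HP HX HY]]]]]]; first by [].
have Hu : uniq (Ls ++ Ps ++ Xs ++ Ys) by rewrite -(perm_uniq Hp).
have {}Hn : nb U r (Ls ++ Ps ++ Xs ++ Ys) by apply: nb_perm Hn.
clear Hp Hch Hcu.
case: (attach_red Hr Hu HL HP HX HY) => [G|Hs]; first by [].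
move: Hn Hu HL HP HX HY; case: Hs => [[c [-> -> -> ->]]|[[a1 [a2 [-> -> -> ->]]]|[[l [a [-> -> -> ->]]]|[[a [-> -> -> ->]]|[[p1 [p2 [p3 [-> -> -> ->]]]]|[[p1 [p2 [-> -> -> ->]]]|[[p1 [-> -> -> ->]]|[[l1 [l2 [-> -> -> ->]]]|[[l1 [-> -> -> ->]]|[-> -> -> ->]]]]]]]]]] => Hn Hu HL HP HX HY; cbn -[nbC] in Hn.
- gY HY c b1 v1 u1 v2 u2.
  app_pat okT9 [:: r; c; b1; v1; u1; v2; u2] r IH.
- gX HX a1 v1 u1 v2 u2. gX HX a2 v3 u3 v4 u4.
  app_pat okT8 [:: r; a1; v1; u1; v2; u2; a2; v3; u3; v4; u4] r IH.
- gL HL l. gX HX a v1 u1 v2 u2.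
  app_pat okT7 [:: r; l; a; v1; u1; v2; u2] r IH.
- gX HX a v1 u1 v2 u2.
  app_pat okT6 [:: r; a; v1; u1; v2; u2] r IH.
- gP HP p1 w1. gP HP p2 w2. gP HP p3 w3.
  app_pat okT5 [:: r; p1; w1; p2; w2; p3; w3] r IH.
- gP HP p1 w1. gP HP p2 w2.
  app_pat okT4 [:: r; p1; w1; p2; w2] r IH.
- gP HP p1 w1.
  app_pat okT3 [:: r; p1; w1] r IH.
- gL HL l1. gL HL l2.
  app_pat okT2 [:: r; l1; l2] r IH.
- gL HL l1.
  app_pat okT1 [:: r; l1] r IH.
- app_pat okT0 [:: r] r IH.
Qed.
End Attach.
End Main2.

Section Main3.
Variable V : finType.
Variable e : rel V.
Hypothesis esy : symmetric e.
Hypothesis eirr : irreflexive e.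
Hypothesis acyc : acyclic_graph e.
Local Notation nb := (nb e).
Local Notation Goal := (Goal e).

Lemma nbw_cons3 (a b c : V) t : nbw e [:: a, b, c & t] = [&& e a b, a != c & nbw e [:: b, c & t]].
Proof. by []. Qed.

Lemma nbw_ext (s : seq V) x y z : nbw e (s ++ [:: x; y]) -> e y z -> z != x -> nbw e (s ++ [:: x; y; z]).
Proof.
elim: s => [|a s IHs].
- by rewrite /= => /andP[-> _] -> Hzx; rewrite eq_sym Hzx.
- have : exists b c t, s ++ [:: x; y] = [:: b, c & t] /\ s ++ [:: x; y; z] = [:: b, c & t ++ [:: z]].
    case: s {IHs} => [|b [|c t]] /=.
    + by exists x, y, [::].
    + by exists b, x, [:: y].
    + by exists b, c, (t ++ [:: x; y]); rewrite -catA.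
  case=> b [c [t [E1 E2]]] H1 H2 H3.
  rewrite cat_cons E2 nbw_cons3; move: H1; rewrite cat_cons E1 nbw_cons3 => /and3P[-> -> H].
  by rewrite -E2 IHs // E1.
Qed.

Lemma classify (U : {set V}) (IH : forall U' : {set V}, #|U'| < #|U| -> Goal U') n :
  forall w x y, #|V| <= n + size w -> nbw e (w ++ [:: x; y]) -> x \in U -> y \in U ->
  Goal U \/ tL e U x y \/ tP2 e U x y \/ tX2 e U x y \/ tY e U x y.
Proof.
elim: n => [|n IHn] w x y Hn Hw Hx Hy.
- exfalso; have Hu := nbw_uniq eirr acyc Hw.
  move/card_uniqP: Hu; rewrite size_cat /= => Hc.
  have := max_card (mem (w ++ [:: x; y])); rewrite Hc; move: Hn => H1 H2; move: (leq_trans H2 H1); rewrite add0n addn2 => /ltnW; by rewrite ltnn.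
- have Exy : e x y by move/nbw_cat: Hw => /= /andP[].
  set cs := enum [set z in U | e y z & z != x].
  apply: (branch_red esy eirr acyc IH (cs := cs) Hx Hy).
  + by rewrite mem_enum inE eqxx !andbF.
  + exact: enum_uniq.
  + move=> w'; rewrite inE mem_enum inE.
    case: (eqVneq w' x) => [->|Hne] /=; first by rewrite Hx esy Exy.
    by rewrite andbT.
  + move=> z; rewrite mem_enum inE => /and3P[Hz Eyz Hzx].
    apply: (IHn (w ++ [:: x])); first by rewrite size_cat /= addn1 addnS -addSn.
    * by rewrite -catA /=; apply: nbw_ext.
    * done.
    * done.
Qed.

Lemma goal_all (U : {set V}) : Goal U.
Proof.
have [n Hn] := ubnP #|U|; elim: n U Hn => // n IHn U HU.
have IH : forall U' : {set V}, #|U'| < #|U| -> Goal U'.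
  by move=> U' H; apply: IHn; lia.
case: (set_0Vmem U) => [->|[r Hr]].
- exists [::], [::]; split; split => //; try (by move=> x y; rewrite inE); by rewrite cards0.
- set cs := enum [set z in U | e r z].
  apply: (root_red esy eirr acyc IH (cs := cs) Hr (enum_uniq _)).
  + by move=> w; rewrite mem_enum inE.
  + move=> z; rewrite mem_enum inE => /andP[Hz Erz].
    apply: (classify IH (n := #|V|) (w := [::])) => //.
    * by rewrite addn0.
    * by rewrite /= Erz.
Qed.
End Main3.

Section Final.
Variable V : finType.
Variable e : rel V.
Hypothesis esy : symmetric e.
Hypothesis eirr : irreflexive e.
Local Notation compat := (compat e).
Local Notation pdisj := (pdisj e).

Fixpoint pairs (L : seq (V * V)) : seq {set V} :=
  match L with
  | l1 :: ((l2 :: L') as L1) => [set x | x \in [:: l1.1; l1.2; l2.1; l2.2]] :: pairs L'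
  | [:: l] => [:: [set x | x \in [:: l.1; l.2]]]
  | [::] => [::]
  end.

Lemma size_pairs L : 2 * size (pairs L) <= size L + 1.
Proof.
have [m Hm] := ubnP (size L); elim: m L Hm => // m IHm [|l1 [|l2 L]] //= Hm.
have : size L < m by lia.
move=> /IHm; lia.
Qed.

Lemma pairs_card L T : T \in pairs L -> #|T| <= 4.
Proof.
have [m Hm] := ubnP (size L); elim: m L Hm => // m IHm [|l1 [|l2 L]] //= Hm.
- by rewrite inE => /eqP->; rewrite cardsE (leq_trans (card_size _)).
- rewrite inE => /orP[/eqP->|]; first by rewrite cardsE (leq_trans (card_size _)).
  by apply: IHm; lia.
Qed.

Lemma pairs_cover L l : l \in L -> exists2 T, T \in pairs L & (l.1 \in T) && (l.2 \in T).
Proof.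
have [m Hm] := ubnP (size L); elim: m L Hm => // m IHm [|l1 [|l2 L]] //= Hm.
- rewrite inE => /eqP->; exists [set x | x \in [:: l1.1; l1.2]]; first by rewrite inE.
  by rewrite !inE !eqxx ?orbT.
- rewrite !inE => /orP[/eqP->|/orP[/eqP->|Hl]].
  + by exists [set x | x \in [:: l1.1; l1.2; l2.1; l2.2]]; rewrite !inE ?eqxx ?orbT.
  + by exists [set x | x \in [:: l1.1; l1.2; l2.1; l2.2]]; rewrite !inE ?eqxx ?orbT.
  + have Hm' : size L < m by move: (size L) Hm => s Hs; lia.
    have [T HT HT'] := IHm L Hm' Hl.
    by exists T => //; rewrite inE HT orbT.
Qed.

Definition lon (x y : V) (l : V * V) := (l == (x, y)) || (l == (y, x)).

Lemma pair_ind2 (a b c d x y : V) : compat (a, b) (c, d) ->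
  induced_edge e [set z | z \in [:: a; b; c; d]] x y -> lon x y (a, b) || lon x y (c, d).
Proof.
rewrite /compat /induced_edge /lon /= !inE => /and5P[H1 H2 H3 H4 /and4P[H5 H6 H7 H8]].
case/and3P => Exy.
case/or4P => /eqP Ex; case/or4P => /eqP Ey; subst x y; rewrite ?eqxx ?orbT //;
  try (by rewrite eirr in Exy);
  by move: Exy; rewrite ?(esy c) ?(esy d) ?(negbTE H5) ?(negbTE H6) ?(negbTE H7) ?(negbTE H8).
Qed.

Lemma pair_ind1 (a b x y : V) :
  induced_edge e [set z | z \in [:: a; b]] x y -> lon x y (a, b).
Proof.
rewrite /induced_edge /lon /= !inE.
case/and3P => Exy.
case/orP => /eqP Ex; case/orP => /eqP Ey; subst x y; rewrite ?eqxx ?orbT //;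
  by rewrite eirr in Exy.
Qed.

Lemma pairs_ind L T x y : pairwise compat L -> T \in pairs L -> induced_edge e T x y -> has (lon x y) L.
Proof.
have [m Hm] := ubnP (size L); elim: m L Hm => // m IHm [|[a b] [|[c d] L]] //= Hm.
- by rewrite inE => _ /eqP-> /pair_ind1 ->.
- move=> /andP[/andP[Hc _] /andP[_ HL]].
  rewrite inE => /orP[/eqP->|HT] Hi.
  + by move: (pair_ind2 Hc Hi) => /orP[->|->]; rewrite ?orbT.
  + by rewrite (IHm L) ?orbT //; lia.
Qed.

Lemma compat_lon l l' x y : compat l l' -> lon x y l -> lon x y l' -> False.
Proof.
case: l l' => a b [c d]; rewrite /compat /lon /= => /and5P[H1 H2 H3 _ _].
by case/orP=> /eqP[Ea Eb]; case/orP=> /eqP[Ec Ed]; subst; rewrite ?eqxx in H1 H2.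
Qed.

Lemma pairs_pw L : pairwise compat L -> pairwise pdisj (pairs L).
Proof.
have [m Hm] := ubnP (size L); elim: m L Hm => // m IHm [|l1 [|l2 L]] //= Hm.
move=> /andP[/andP[H12 H1L] /andP[H2L HL]].
apply/andP; split; last by apply: IHm => //; lia.
apply/allP => T HT; apply/forallP => x; apply/forallP => y; apply/negP => /andP[I1 I2].
have [l Hl Hlon] := hasP (pairs_ind HL HT I2).
case: l1 l2 H12 H1L H2L I1 => [a b] [c d] H12 H1L H2L I1.
case/orP: (pair_ind2 H12 I1) => Hlo.
- by apply: (compat_lon (allP H1L _ Hl) Hlo Hlon).
- by apply: (compat_lon (allP H2L _ Hl) Hlo Hlon).
Qed.
End Final.

Theorem mainTheorem10 (V : finType) (e : rel V) (n : nat) :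
  is_tree e -> #|V| = n -> 1 <= n ->
  exists S : 'I_((3 * (n - 1) + 7) %/ 8) -> {set V},
    [/\ forall i, #|S i| <= 4,
        pairwise_edge_disjoint e S
      & covers_edges e S].
Proof.
move=> [[esy eirr] _ acyc] Hn Hn1.
have [P [L [[G1 G2 G3 G4] [G5 G6 G7]]]] := goal_all esy eirr acyc [set: V].
set Q := P ++ pairs L.
have HQ : size Q <= (3 * (n - 1) + 7) %/ 8.
  move: G7; rewrite cardsT Hn /Q size_cat => H.
  have := size_pairs L; move: (size P) (size L) (size (pairs L)) H => a b c H1 H2.
  clear -H1 H2 Hn1; lia.
have Qcard : all (fun S : {set V} => #|S| <= 4) Q.
  rewrite all_cat; apply/andP; split; first by apply/allP => S /(allP G1) /andP[].
  by apply/allP => S; apply: pairs_card.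
have symp : forall S T, pdisj e S T -> pdisj e T S.
  move=> S T /forallP H; apply/forallP => x; apply/forallP => y.
  by move: (forallP (H x) y); rewrite andbC.
have Qpw : pairwise (pdisj e) Q.
  rewrite /Q pairwise_cat G2 (pairs_pw esy eirr G4) !andbT /=.
  apply/allrelP => S T HS HT; apply/forallP => x; apply/forallP => y; apply/negP => /andP[I1 I2].
  have [l Hl /orP[/eqP El|/eqP El]] := hasP (pairs_ind esy eirr G4 HT I2).
  - by move: (allP (allP G5 _ Hl) _ HS); rewrite El /= I1.
  - move: (allP (allP G5 _ Hl) _ HS); rewrite El /=.
    by move: I1; rewrite /induced_edge esy => /and3P[-> -> ->].
have Qcov : forall x y, e x y -> has (fun S => induced_edge e S x y) Q.
  move=> x y Exy; case/orP: (G6 x y (in_setT _) (in_setT _) Exy) => H.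
  - by rewrite /Q has_cat H.
  - case/hasP: H => l Hl Hlon; have [T HT /andP[T1 T2]] := pairs_cover Hl.
    rewrite /Q has_cat; apply/orP; right; apply/hasP; exists T; first done.
    by case/orP: Hlon => /eqP El; move: T1 T2; rewrite El /= /induced_edge Exy => -> ->.
exists (fun i => nth set0 Q i); split.
- move=> i; case: (ltnP i (size Q)) => Hi.
  + by apply: (allP Qcard); exact: mem_nth.
  + by rewrite nth_default // cards0.
- move=> i j Hij x y.
  have key : forall i j : nat, i < j -> ~~ (induced_edge e (nth set0 Q i) x y && induced_edge e (nth set0 Q j) x y).
    move=> i' j' Hlt; case: (ltnP j' (size Q)) => Hj.
    + have Hi : i' < size Q by apply: ltn_trans Hj.
      by move: (pairwiseP set0 Qpw i' j' Hi Hj Hlt) => /forallP/(_ x)/forallP/(_ y).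
    + by rewrite (nth_default _ Hj) /induced_edge inE !andbF.
  case: (ltngtP i j) => [Hlt|Hgt|Heq].
  + exact: key.
  + by rewrite andbC; apply: key.
  + by move: Hij; rewrite (val_inj Heq) eqxx.
- move=> x y Exy; case/hasP: (Qcov x y Exy) => T HT HTi.
  have Hi : index T Q < (3 * (n - 1) + 7) %/ 8 by apply: leq_trans HQ; rewrite index_mem.
  by exists (Ordinal Hi); rewrite /= nth_index.
Qed.
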